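(* Let $q$ be a power of an odd prime with $q\equiv 3\pmod 4$. Let $P\subset\mathbb{F}_q^3$ be a set of points and $S$ a set of spheres in $\mathbb{F}_q^3$ all of whose radii are squares in $\mathbb{F}_q$, with $|P|=|S|\sim q^2$. Then \[ I(P,S)\ll |P|^{3/4}|S|^{3/4}. \]
   Context: A sphere in $\mathbb{F}_q^3$ with center $c\in\mathbb{F}_q^3$ and radius $r\in\mathbb{F}_q$ is $\{x : (x_1-c_1)^2+(x_2-c_2)^2+(x_3-c_3)^2=r\}$; a radius is a square if it equals $t^2$ for some $t\in\mathbb{F}_q$. $I(P,S)=\#\{(p,s)\in P\times S: p\in s\}$. $X\ll Y$ means $X\le CY$ for an absolute constant $C>0$, and $X\sim Y$ means $Y\ll X\ll Y$. *)

(* Defs.v *)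
From HB Require Import structures.
From mathcomp Require Import all_boot all_order all_algebra all_field.
Set Implicit Arguments. Unset Strict Implicit. Unset Printing Implicit Defensive.
Import GRing.Theory.
Local Open Scope ring_scope.

Definition on_sphere (F : finFieldType) (x c : 'rV[F]_3) (r : F) : bool :=
  \sum_(i < 3) (x ord0 i - c ord0 i) ^+ 2 == r.

Definition is_square (F : finFieldType) (r : F) : bool :=
  [exists t : F, r == t ^+ 2].

Definition incidences (F : finFieldType) (P : {set 'rV[F]_3})
  (S : {set 'rV[F]_3 * F}) : nat :=
  #|[set ps in setX P S | on_sphere ps.1 ps.2.1 ps.2.2]|.

(* Main.v *)
Require Import Defs.
From HB Require Import structures.
From mathcomp Require Import all_boot all_order all_algebra all_field.
From mathcomp Require Import ring lra zify.
Set Implicit Arguments. Unset Strict Implicit. Unset Printing Implicit Defensive.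
Import Order.TTheory GRing.Theory Num.Theory.
Local Open Scope ring_scope.

Lemma inj_card_le (T T' : finType) (A : {set T}) (B : {set T'}) (f : T -> T') :
  {in A &, injective f} -> (forall x, x \in A -> f x \in B) -> (#|A| <= #|B|)%N.
Proof.
move=> fi fB; rewrite -(card_in_imset fi); apply: subset_leq_card.
by apply/subsetP => y /imsetP [x xA ->]; exact: fB.
Qed.

Lemma var_expand (T : finType) (A : {pred T}) (f : T -> int) (a b : int) :
  \sum_(x in A) (a * f x - b) ^+ 2 =
  a ^+ 2 * \sum_(x in A) f x ^+ 2 - 2 * a * b * \sum_(x in A) f x + #|A|%:R * b ^+ 2.
Proof.
rewrite (eq_bigr (fun x => a ^+ 2 * f x ^+ 2 - 2 * a * b * f x + b ^+ 2)); last by move=> x _; ring.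
rewrite big_split sumrB /=. rewrite -!mulr_sumr sumr_const -mulr_natr; ring.
Qed.

Lemma cs_int (T : finType) (A : {pred T}) (f : T -> int) :
  (\sum_(x in A) f x) ^+ 2 <= #|A|%:R * \sum_(x in A) f x ^+ 2.
Proof.
have [n0|np] := eqVneq #|A| 0%N.
  have A0 x : (x \in A) = false by rewrite (card0_eq n0).
  by rewrite !big_pred0 // n0 mul0r expr0n.
have h := var_expand A f #|A|%:R (\sum_(x in A) f x).
have : 0 <= \sum_(x in A) (#|A|%:R * f x - \sum_(x in A) f x) ^+ 2 by apply: sumr_ge0 => x _; exact: sqr_ge0.
rewrite h => h0.
have hp : (0 : int) < #|A|%:R by rewrite ltr0n lt0n.
rewrite -(ler_pM2l hp) -subr_ge0; apply: le_trans h0 _; rewrite le_eqVlt; apply/orP; left; apply/eqP; ring.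
Qed.

Lemma card_sum (T : finType) (A : {set T}) (R : pred T) :
  #|[set x in A | R x]| = (\sum_(x in A) R x)%N.
Proof.
rewrite -sum1_card big_mkcond [RHS]big_mkcond /=; apply: eq_bigr => x _; rewrite !inE.
by case: (x \in A); case: (R x).
Qed.

Lemma var_expandT (T : finType) (f : T -> int) (a b : int) :
  \sum_x (a * f x - b) ^+ 2 =
  a ^+ 2 * \sum_x f x ^+ 2 - 2 * a * b * \sum_x f x + #|T|%:R * b ^+ 2.
Proof.
rewrite (eq_bigr (fun x => a ^+ 2 * f x ^+ 2 - 2 * a * b * f x + b ^+ 2)); last by move=> x _; ring.
by rewrite big_split sumrB /= -!mulr_sumr sumr_const -mulr_natr; ring.
Qed.

Section Vec.
Variable F : finFieldType.
Definition Q3 (a b c : F) := a ^+ 2 + b ^+ 2 + c ^+ 2.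
Definition dot3 (a b c u v w : F) := a * u + b * v + c * w.
Definition co (x : 'rV[F]_3) (i : nat) : F := x ord0 (inord i).

Lemma sum3 (f : 'I_3 -> F) : \sum_(i < 3) f i = f (inord 0) + f (inord 1) + f (inord 2).
Proof.
rewrite !big_ord_recl big_ord0 addr0 addrA /=; congr (f _ + f _ + f _); apply: val_inj; by rewrite /= inordK.
Qed.

Lemma on_sphereE (x c : 'rV[F]_3) r :
  on_sphere x c r = (Q3 (co x 0 - co c 0) (co x 1 - co c 1) (co x 2 - co c 2) == r).
Proof. by rewrite /on_sphere sum3. Qed.

Lemma rv_eq (x y : 'rV[F]_3) : co x 0 = co y 0 -> co x 1 = co y 1 -> co x 2 = co y 2 -> x = y.
Proof.
move=> h0 h1 h2; apply/rowP => i.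
have -> : i = inord i by apply: val_inj; rewrite /= inordK.
case: i => [[|[|[|m]]] hi] //=.
Qed.

Definition mk3 (a b c : F) : 'rV[F]_3 := \row_(i < 3) nth 0 [:: a; b; c] i.
Lemma mk3E a b c : [/\ co (mk3 a b c) 0 = a, co (mk3 a b c) 1 = b & co (mk3 a b c) 2 = c].
Proof. by rewrite /co !mxE !inordK. Qed.
Lemma mk3E0 a b c : co (mk3 a b c) 0 = a. Proof. by have [] := mk3E a b c. Qed.
Lemma mk3E1 a b c : co (mk3 a b c) 1 = b. Proof. by have [] := mk3E a b c. Qed.
Lemma mk3E2 a b c : co (mk3 a b c) 2 = c. Proof. by have [] := mk3E a b c. Qed.

Lemma pencil_gen (T : finType) (A : {set T}) (p : T) (f g h : T -> F) (n0 n1 n2 : F) :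
  n2 != 0 ->
  (forall x, x \in A -> n0 * f x + n1 * g x + n2 * h x = 0) ->
  (forall x, x \in A -> f x = 0 -> g x = 0 -> h x = 0 -> x = p) ->
  (forall x y t, x \in A -> y \in A -> x != p -> y != p ->
      f y = t * f x -> g y = t * g x -> h y = t * h x -> x = y) ->
  (#|A| <= #|F|.+2)%N.
Proof.
move=> n20 hn hp hl.
have hh x : x \in A -> h x = - (n0 * f x + n1 * g x) / n2.
  move=> xA; apply: (mulIf n20); rewrite divfK //.
  have := hn x xA => e; apply/eqP; rewrite -subr_eq0 -(eqP (eqxx 0)); apply/eqP.
  rewrite -e; ring.
pose key x := if f x != 0 then Some (g x / f x) else None.
have : (#|A :\ p| <= #|{: option F}|)%N.
  rewrite -cardsT; apply: (@inj_card_le _ _ _ _ key); last by move=> *; rewrite inE.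
  move=> x y; rewrite !inE => /andP [xp xA] /andP [yp yA]; rewrite /key.
  have lin t : f y = t * f x -> g y = t * g x -> x = y.
    move=> ef eg; apply: (hl x y t) => //; rewrite (hh x xA) (hh y yA) ef eg; ring.
  case: ifP => fx; case: ifP => fy //; [case=> e | move=> _].
    apply: (lin (f y / f x)); first by rewrite divfK.
    move: e => /(congr1 ( *%R^~ (f y))); rewrite /= divfK // => e'.
    apply: etrans (esym e') _; field; exact: fx.
  have gx : g x != 0.
    apply/negP => /eqP gx0; move/negP: xp; apply; apply/eqP; apply: hp => //.
      exact/eqP/negbFE.
    by rewrite (hh x xA) (eqP (negbFE fx)) gx0; ring.
  apply: (lin (g y / g x)); last by rewrite divfK.
  by rewrite (eqP (negbFE fx)) (eqP (negbFE fy)) mulr0.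
rewrite card_option => h1.
apply: leq_trans (_ : #|A :\ p|.+1 <= _)%N => //.
by rewrite (cardsD1 p A); case: (p \in A).
Qed.

Lemma pencil3 (A : {set 'rV[F]_3}) (p : 'rV[F]_3) (n0 n1 n2 : F) :
  [|| n0 != 0, n1 != 0 | n2 != 0] ->
  (forall x, x \in A -> dot3 (co x 0 - co p 0) (co x 1 - co p 1) (co x 2 - co p 2) n0 n1 n2 = 0) ->
  (forall x y t, x \in A -> y \in A -> x != p -> y != p ->
      co y 0 - co p 0 = t * (co x 0 - co p 0) ->
      co y 1 - co p 1 = t * (co x 1 - co p 1) ->
      co y 2 - co p 2 = t * (co x 2 - co p 2) -> x = y) ->
  (#|A| <= #|F|.+2)%N.
Proof.
move=> nn hd hl.
have hp x : co x 0 - co p 0 = 0 -> co x 1 - co p 1 = 0 -> co x 2 - co p 2 = 0 -> x = p.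
  by move=> /eqP; rewrite subr_eq0 => /eqP h0 /eqP; rewrite subr_eq0 => /eqP h1 /eqP;
     rewrite subr_eq0 => /eqP h2; apply: rv_eq.
have [n20|n20] := eqVneq n2 0; last first.
  apply: (@pencil_gen _ A p (fun x => co x 0 - co p 0) (fun x => co x 1 - co p 1)
     (fun x => co x 2 - co p 2) n0 n1 n2 n20).
  - by move=> x xA; rewrite -(hd x xA) /dot3; ring.
  - by move=> x xA; apply: hp.
  - by move=> x y t xA yA xp yp e0 e1 e2; apply: (hl x y t).
have [n10|n10] := eqVneq n1 0; last first.
  apply: (@pencil_gen _ A p (fun x => co x 0 - co p 0) (fun x => co x 2 - co p 2)
     (fun x => co x 1 - co p 1) n0 n2 n1 n10).
  - by move=> x xA; rewrite -(hd x xA) /dot3; ring.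
  - by move=> x xA e0 e2 e1; apply: hp.
  - by move=> x y t xA yA xp yp e0 e2 e1; apply: (hl x y t).
move: nn; rewrite n20 n10 eqxx !orbF => n00.
apply: (@pencil_gen _ A p (fun x => co x 1 - co p 1) (fun x => co x 2 - co p 2)
   (fun x => co x 0 - co p 0) n1 n2 n0 n00).
- by move=> x xA; rewrite -(hd x xA) /dot3; ring.
- by move=> x xA e1 e2 e0; apply: hp.
- by move=> x y t xA yA xp yp e1 e2 e0; apply: (hl x y t).
Qed.

Definition sph (c : 'rV[F]_3) (r : F) : {set 'rV[F]_3} := [set x | on_sphere x c r].
End Vec.

Section Field.
Variable F : finFieldType.
Hypothesis hq : (#|F| %% 4 = 3)%N.

Lemma two_neq0 : (2 : F) != 0.
Proof.
apply/negP => /eqP h2.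
have pc : (2%N \in [pchar F]) by rewrite inE /= h2 eqxx.
have := card_pprimeChar pc.
set n := logn _ _ => hc.
move: hq; rewrite /= in hc.
have -> : #|F| = (2 ^ n)%N by exact: hc.
case: n {hc} => [|[|n]] //.
rewrite !expnS; move: (2 ^ n)%N => m; lia.
Qed.

Lemma m1_nonsq (x : F) : x ^+ 2 != -1.
Proof.
apply/negP => /eqP hx.
have x0 : x != 0 by apply/eqP => e; move: hx; rewrite e expr0n /= => /eqP; rewrite eq_sym oppr_eq0 oner_eq0.
have h1 : x ^+ #|F|.-1 = 1.
  have := expf_card x.
  have hF : #|F| = (#|F|.-1).+1 by rewrite prednK // (cardD1 0) inE.
  rewrite {1}hF exprSr => /eqP; rewrite -{3}(mul1r x) -subr_eq0 -mulrBl mulf_eq0 (negbTE x0) orbF subr_eq0 => /eqP //.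
have hm : #|F|.-1 = (2 * (2 * (#|F| %/ 4) + 1))%N.
  rewrite {1}(divn_eq #|F| 4) hq; lia.
move: h1; rewrite hm exprM hx exprD exprM sqrrN expr1n expr1n mul1r => /eqP.
rewrite expr1 eq_sym -subr_eq0 opprK => /eqP h.
by move: two_neq0; rewrite -h eqxx.
Qed.

Lemma sum2sq (a : F) : exists x y : F, x ^+ 2 + y ^+ 2 = a.
Proof.
pose r v := odflt 0 [pick y : F | y ^+ 2 == v].
have rP x : r (x ^+ 2) ^+ 2 = x ^+ 2.
  rewrite /r; case: pickP => [y /eqP //|/(_ x)]; by rewrite eqxx.
pose A := [set x ^+ 2 | x : F].
pose B := [set a - z | z in A].
have cF : (#|F| <= 2 * #|A|)%N.
  have -> : (2 * #|A| = #|setX A [set: bool]|)%N by rewrite cardsX cardsT card_bool mulnC.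
  rewrite -cardsT; apply: (@inj_card_le _ _ _ _ (fun x => (x ^+ 2, x == r (x ^+ 2)))).
    move=> x y _ _ [] e; rewrite -e.
    have := rP x; set z := r _ => hz hb.
    move: e => /eqP; rewrite eq_sym eqf_sqr => /orP [/eqP -> //|/eqP ey].
    move: hz => /eqP; rewrite eqf_sqr => /orP [/eqP ez|/eqP ez].
      by move: hb; rewrite ez eqxx ey => /esym /eqP.
    by move: hb; rewrite ez ey eqxx => /eqP.
  by move=> x _; rewrite in_setX in_setT andbT; apply/imsetP; exists x.
have cB : #|B| = #|A| by apply: card_imset => u v /addrI /oppr_inj.
have : (#|A :|: B| <= #|F|)%N by rewrite -cardsT; apply: subset_leq_card; apply/subsetP.
rewrite cardsU cB.
case: (set_0Vmem (A :&: B)) => [->|[z]]; last first.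
  rewrite !inE => /andP [/imsetP [x _ ->] /imsetP [w /imsetP [y _ ->] e]].
  by exists x, y; rewrite e addrNK.
move=> h; exfalso; move: h cF hq; rewrite cards0; lia.
Qed.


Lemma sq0 (a : F) : a ^+ 2 = 0 -> a = 0.
Proof. by move/eqP; rewrite expf_eq0 /= => /eqP. Qed.

Lemma sum2sq0 (a b : F) : a ^+ 2 + b ^+ 2 = 0 -> a = 0 /\ b = 0.
Proof.
move=> h; have a0 : a = 0.
  have [//|a0] := eqVneq a 0; exfalso; apply/negP: (m1_nonsq (b / a)); apply/negPn/eqP.
  have n0 : a ^+ 2 != 0 by rewrite expf_eq0.
  rewrite expr_div_n; apply: (mulIf n0); rewrite divfK //.
  have -> : b ^+ 2 = -1 * a ^+ 2 + (a ^+ 2 + b ^+ 2) by ring.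
  by rewrite h addr0.
by split=> //; move: h; rewrite a0 expr0n /= add0r => /sq0.
Qed.

Lemma iso_d2 (d0 d1 d2 : F) : Q3 d0 d1 d2 = 0 -> d2 = 0 -> d0 = 0 /\ d1 = 0.
Proof. by rewrite /Q3 => h e; move: h; rewrite e expr0n /= addr0 => /sum2sq0. Qed.

Lemma iso_ident (d0 d1 d2 e0 e1 e2 : F) : Q3 d0 d1 d2 = 0 -> dot3 e0 e1 e2 d0 d1 d2 = 0 ->
  d2 ^+ 2 * Q3 e0 e1 e2 = - (d0 * e1 - d1 * e0) ^+ 2.
Proof.
rewrite /Q3 /dot3 => hQ hd.
have -> : d2 ^+ 2 * (e0 ^+ 2 + e1 ^+ 2 + e2 ^+ 2) = - (d0 * e1 - d1 * e0) ^+ 2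
   + (e0 ^+ 2 + e1 ^+ 2) * (d0 ^+ 2 + d1 ^+ 2 + d2 ^+ 2)
   + (e0 * d0 + e1 * d1 + e2 * d2 - 2 * (e0 * d0 + e1 * d1)) * (e0 * d0 + e1 * d1 + e2 * d2) by ring.
by rewrite hQ hd; ring.
Qed.

Lemma no_line_ell (d0 d1 d2 e0 e1 e2 t : F) : Q3 d0 d1 d2 = 0 -> dot3 e0 e1 e2 d0 d1 d2 = 0 ->
  Q3 e0 e1 e2 = t ^+ 2 -> t != 0 -> d0 = 0 /\ d1 = 0 /\ d2 = 0.
Proof.
move=> hQ hd he t0.
have [d20|d20] := eqVneq d2 0; first by have [] := iso_d2 hQ d20.
have := iso_ident hQ hd; rewrite he => h; exfalso.
apply/negP: (m1_nonsq ((d0 * e1 - d1 * e0) / (d2 * t))); apply/negPn/eqP.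
have n0 : (d2 * t) ^+ 2 != 0 by rewrite expf_eq0 mulf_eq0 negb_or d20.
rewrite expr_div_n; apply: (mulIf n0); rewrite divfK // exprMn h; ring.
Qed.

Lemma no_line_cone (d0 d1 d2 e0 e1 e2 : F) : Q3 d0 d1 d2 = 0 -> dot3 e0 e1 e2 d0 d1 d2 = 0 ->
  Q3 e0 e1 e2 = 0 -> d2 != 0 -> 
  d2 * e0 = e2 * d0 /\ d2 * e1 = e2 * d1.
Proof.
move=> hQ hd he d20.
have := iso_ident hQ hd; rewrite he mulr0 => /esym /eqP; rewrite oppr_eq0 => /eqP /sq0 hw.
split; apply: (mulfI d20); apply/eqP; rewrite -subr_eq0; apply/eqP.
  have -> : d2 * (d2 * e0) - d2 * (e2 * d0) = (d0 ^+ 2 + d1 ^+ 2 + d2 ^+ 2) * e0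
     - d0 * (e0 * d0 + e1 * d1 + e2 * d2) + d1 * (d0 * e1 - d1 * e0) by ring.
  by move: hQ hd; rewrite /Q3 /dot3 => -> ->; rewrite hw; ring.
have -> : d2 * (d2 * e1) - d2 * (e2 * d1) = (d0 ^+ 2 + d1 ^+ 2 + d2 ^+ 2) * e1
   - d1 * (e0 * d0 + e1 * d1 + e2 * d2) - d0 * (d0 * e1 - d1 * e0) by ring.
by move: hQ hd; rewrite /Q3 /dot3 => -> ->; rewrite hw; ring.
Qed.


Lemma line_alg (r e0 e1 e2 d0 d1 d2 t : F) : Q3 e0 e1 e2 = r ->
  Q3 (e0 + d0) (e1 + d1) (e2 + d2) = r -> Q3 (e0 + t * d0) (e1 + t * d1) (e2 + t * d2) = r ->
  t != 0 -> t != 1 -> Q3 d0 d1 d2 = 0 /\ dot3 e0 e1 e2 d0 d1 d2 = 0.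
Proof.
move=> h0 h1 ht t0 t1.
have a1 : 2 * dot3 e0 e1 e2 d0 d1 d2 + Q3 d0 d1 d2 = 0.
  rewrite -(subrr r) -{1}h1 -h0 /Q3 /dot3; ring.
have a2 : 2 * dot3 e0 e1 e2 d0 d1 d2 + t * Q3 d0 d1 d2 = 0.
  apply: (mulfI t0); rewrite mulr0 -(subrr r) -{1}ht -h0 /Q3 /dot3; ring.
have q0 : Q3 d0 d1 d2 = 0.
  have : (1 - t) * Q3 d0 d1 d2 = 0 by rewrite -(subrr 0) -{1}a1 -a2; ring.
  by move/eqP; rewrite mulf_eq0 subr_eq0 eq_sym (negbTE t1) /= => /eqP.
split=> //; move: a1; rewrite q0 addr0 => /eqP; rewrite mulf_eq0 (negbTE two_neq0) /=.
by move/eqP.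
Qed.

Definition LF (r n0 n1 n2 dl : F) := forall e0 e1 e2 d0 d1 d2 : F,
  Q3 d0 d1 d2 = 0 -> dot3 e0 e1 e2 d0 d1 d2 = 0 -> Q3 e0 e1 e2 = r ->
  dot3 e0 e1 e2 n0 n1 n2 = dl -> dot3 d0 d1 d2 n0 n1 n2 = 0 -> [/\ d0 = 0, d1 = 0 & d2 = 0].

Lemma sphere_pencil (A : {set 'rV[F]_3}) (c : 'rV[F]_3) (r n0 n1 n2 dl : F) :
  [|| n0 != 0, n1 != 0 | n2 != 0] ->
  (forall x, x \in A -> on_sphere x c r) ->
  (forall x, x \in A -> dot3 (co x 0 - co c 0) (co x 1 - co c 1) (co x 2 - co c 2) n0 n1 n2 = dl) ->
  LF r n0 n1 n2 dl -> (#|A| <= #|F|.+2)%N.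
Proof.
move=> nn hs hpl lf.
case: (set_0Vmem A) => [->|[p pA]]; first by rewrite cards0.
have hd x : x \in A -> dot3 (co x 0 - co p 0) (co x 1 - co p 1) (co x 2 - co p 2) n0 n1 n2 = 0.
  move=> xA; rewrite -(subrr dl) -{1}(hpl x xA) -(hpl p pA) /dot3; ring.
apply: (pencil3 nn hd) => x y t xA yA xp yp ey0 ey1 ey2.
have sp := hs p pA; have sx := hs x xA; have sy := hs y yA.
move: sp sx sy; rewrite !on_sphereE => /eqP sp /eqP sx /eqP sy.
have ex i : co x i - co c i = (co p i - co c i) + (co x i - co p i) by ring.
have ey i : co y i - co c i = (co p i - co c i) + (co y i - co p i) by ring.
move: sx sy; rewrite !ex !ey ey0 ey1 ey2 => sx sy.
have eqc (a b : F) : a - b = 0 -> a = b by move/eqP; rewrite subr_eq0 => /eqP.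
have [t0|t0] := eqVneq t 0.
  have yp' : y = p by apply: rv_eq; apply: eqc; rewrite ?ey0 ?ey1 ?ey2 t0 mul0r.
  by rewrite yp' eqxx in yp.
have [t1|t1] := eqVneq t 1.
  have e3 (a b u : F) : b - u = 1 * (a - u) -> a = b by move=> h; apply: eqc; rewrite -(subrr (b - u)) {1}h; ring.
  apply: rv_eq; [apply: (e3 _ _ (co p 0)) | apply: (e3 _ _ (co p 1)) | apply: (e3 _ _ (co p 2))];
  by rewrite -t1.
have [qd dd] := line_alg sp sx sy t0 t1.
have [d0 d1 d2] := lf _ _ _ _ _ _ qd dd sp (hpl p pA) (hd x xA).
have xp' : x = p by apply: rv_eq; apply: eqc.
by rewrite xp' eqxx in xp.
Qed.

Section Pair.
Variables (c c' : 'rV[F]_3) (r r' : F).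
Let e (x : 'rV[F]_3) i := co x i - co c i.
Let n i := co c' i - co c i.
Let A := sph c r :&: sph c' r'.

Lemma inter_plane x : x \in A ->
  Q3 (e x 0) (e x 1) (e x 2) = r /\
  dot3 (e x 0) (e x 1) (e x 2) (n 0) (n 1) (n 2) = (r - r' + Q3 (n 0) (n 1) (n 2)) / 2.
Proof.
rewrite !inE !on_sphereE => /andP [/eqP h1 /eqP h2]; split => //.
apply: (mulIf two_neq0); rewrite divfK ?two_neq0 //.
rewrite -h1 -h2 /e /n /Q3 /dot3; ring.
Qed.

Lemma pair_ell t : t != 0 -> r = t ^+ 2 -> [|| n 0 != 0, n 1 != 0 | n 2 != 0] -> (#|A| <= #|F|.+2)%N.
Proof.
move=> t0 rt nn.
apply: (@sphere_pencil A c r (n 0) (n 1) (n 2) ((r - r' + Q3 (n 0) (n 1) (n 2)) / 2) nn).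
- by move=> x; rewrite !inE => /andP [].
- by move=> x /inter_plane [].
- move=> e0 e1 e2 d0 d1 d2 hQ hd he _ _; rewrite rt in he.
  by have [? [? ?]] := no_line_ell hQ hd he t0.
Qed.

Lemma pair_cone : r = 0 -> r' = 0 -> [|| n 0 != 0, n 1 != 0 | n 2 != 0] -> (#|A| <= #|F|.+2)%N.
Proof.
move=> r0 r'0 nn.
have [qn|qn] := eqVneq (Q3 (n 0) (n 1) (n 2)) 0.
  have n2 : n 2 != 0.
    apply/negP => /eqP n2; have [n0 n1] := iso_d2 qn n2.
    by move: nn; rewrite n0 n1 n2 eqxx.
  apply: (@leq_trans #|F|); last by rewrite leqW.
  rewrite -cardsT; apply: (@inj_card_le _ _ _ _ (fun x => co x 2)); last by move=> *; rewrite inE.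
  move=> x y xA yA /= e2.
  have [hx dx] := inter_plane xA; have [hy dy] := inter_plane yA.
  rewrite r0 r'0 qn subr0 addr0 mul0r in hx hy dx dy.
  have dx' : dot3 (e x 0) (e x 1) (e x 2) (n 0) (n 1) (n 2) = 0 by [].
  have [hx0 hx1] := no_line_cone qn dx hx n2.
  have [hy0 hy1] := no_line_cone qn dy hy n2.
  have ee : e x 2 = e y 2 by rewrite /e e2.
  rewrite ee in hx0 hx1; rewrite -hx0 in hy0; rewrite -hx1 in hy1.
  have f0 := mulfI n2 hy0; have f1 := mulfI n2 hy1.
  apply: rv_eq => //.
  - by move: f0; rewrite /e => /eqP; rewrite (can_eq (subrK _)) => /eqP.
  - by move: f1; rewrite /e => /eqP; rewrite (can_eq (subrK _)) => /eqP.
set dl := (r - r' + Q3 (n 0) (n 1) (n 2)) / 2.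
have dl0 : dl != 0.
  rewrite /dl r0 r'0 subr0 add0r mulf_eq0 negb_or qn /=. rewrite invr_eq0. exact: two_neq0.
apply: (@sphere_pencil A c r (n 0) (n 1) (n 2) dl nn).
- by move=> x; rewrite !inE => /andP [].
- by move=> x /inter_plane [].
- move=> e0 e1 e2 d0 d1 d2 hQ hd he hen hdn; rewrite r0 in he.
  have [d20|d20] := eqVneq d2 0; first by have [] := iso_d2 hQ d20.
  have [h0 h1] := no_line_cone hQ hd he d20.
  exfalso; move: dl0; rewrite -hen; apply/negP; rewrite negbK.
  rewrite -(mulrI_eq0 _ (lregP d20)) .
  have -> : d2 * dot3 e0 e1 e2 (n 0) (n 1) (n 2) = 
     (d2 * e0) * n 0 + (d2 * e1) * n 1 + d2 * e2 * n 2 by rewrite /dot3; ring.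
  rewrite h0 h1; apply/eqP; transitivity (e2 * dot3 d0 d1 d2 (n 0) (n 1) (n 2)).
    by rewrite /dot3; ring.
  by rewrite hdn mulr0.
Qed.
End Pair.

Lemma pair_bound (c c' : 'rV[F]_3) (r r' : F) : is_square r -> is_square r' -> (c, r) != (c', r') ->
  (#|sph c r :&: sph c' r'| <= #|F|.+2)%N.
Proof.
move=> /existsP [t /eqP rt] /existsP [t' /eqP rt'] neq.
case nn : [|| co c' 0 - co c 0 != 0, co c' 1 - co c 1 != 0 | co c' 2 - co c 2 != 0]; last first.
  move: nn => /negbT; rewrite !negb_or !negbK !subr_eq0 => /and3P [/eqP e0 /eqP e1 /eqP e2].
  have cc : c' = c by apply: rv_eq.
  rewrite cc in neq *.
  suff -> : sph c r :&: sph c r' = set0 by rewrite cards0.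
  apply/setP => x; rewrite !inE !on_sphereE.
  apply/negP => /andP [/eqP h1 /eqP h2]; move: neq; rewrite -h1 -h2 eqxx //.
have [t0|t0] := eqVneq t 0; last exact: (pair_ell r' t0 rt nn).
have [t'0|t'0] := eqVneq t' 0; last first.
  rewrite setIC; apply: (pair_ell r t'0 rt').
  by move: nn; rewrite !subr_eq0 !(eq_sym (co c _)).
by apply: pair_cone nn; rewrite ?rt ?rt' ?t0 ?t'0 expr0n.
Qed.

Lemma sph_upper (c : 'rV[F]_3) (r : F) : (#|sph c r| <= #|F| * #|F|.+2)%N.
Proof.
rewrite -sum1_card (partition_big (fun x => co x 2) predT) //=.
apply: (@leq_trans (\sum_(z : F) #|F|.+2)); last by rewrite sum_nat_const.
apply: leq_sum => z _.
rewrite sum1_card.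
have -> : #|[pred x | (x \in sph c r) && (co x 2 == z)]| = #|sph c r :&: [set x | co x 2 == z]|.
  by apply: eq_card => x; rewrite !inE.
apply: (@sphere_pencil _ c r 0 0 1 (z - co c 2)).
- by rewrite oner_neq0 !orbT.
- by move=> x; rewrite !inE => /andP [].
- by move=> x; rewrite !inE => /andP [_ /eqP ->]; rewrite /dot3; ring.
- move=> e0 e1 e2 d0 d1 d2 hQ _ _ _ hd.
  have d20 : d2 = 0 by rewrite -hd /dot3; ring.
  by have [] := iso_d2 hQ d20.
Qed.

Lemma sq_fiber (w K : F) : (#|[set z : F | (z - w) ^+ 2 == K]| <= 2)%N.
Proof.
case: (set_0Vmem [set z : F | (z - w) ^+ 2 == K]) => [->|[z0]]; first by rewrite cards0.
rewrite inE => /eqP h0.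
apply: (@leq_trans #|[set z0; 2 * w - z0]|); last by rewrite cards2; case: (_ != _).
apply: subset_leq_card; apply/subsetP => z; rewrite !inE -h0 eqf_sqr => /orP [/eqP h|/eqP h].
  by apply/orP; left; apply/eqP; rewrite -(subrK w z) h subrK.
apply/orP; right; apply/eqP; rewrite -(subrK w z) h; ring.
Qed.

Definition rep (a : F) : F * F := odflt (0, 0) [pick p : F * F | p.1 ^+ 2 + p.2 ^+ 2 == a].
Lemma repP a : (rep a).1 ^+ 2 + (rep a).2 ^+ 2 = a.
Proof.
rewrite /rep; case: pickP => [p /eqP //|h].
have [x [y e]] := sum2sq a; by move: (h (x, y)); rewrite /= e eqxx.
Qed.

Lemma onepm2 (m : F) : 1 + m ^+ 2 != 0.
Proof.
apply/negP => /eqP h; apply/negP: (m1_nonsq m); apply/negPn/eqP.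
have -> : m ^+ 2 = (1 + m ^+ 2) - 1 by ring.
by rewrite h sub0r.
Qed.

Lemma sph_lower (c : 'rV[F]_3) (r : F) : (#|F| * (#|F| - 2) <= #|sph c r|)%N.
Proof.
pose a z := r - (z - co c 2) ^+ 2.
pose Z := [set z | a z != 0].
have cZ : (#|F| - 2 <= #|Z|)%N.
  have := cardsC Z; have := sq_fiber (co c 2) r.
  have -> : ~: Z = [set z : F | (z - co c 2) ^+ 2 == r].
    by apply/setP => z; rewrite !inE negbK /a subr_eq0 eq_sym.
  move=> h1 h2; by rewrite -h2 leq_subLR addnC leq_add2r.
pose lam (p : F * F) m := - 2 * (p.1 + p.2 * m) / (1 + m ^+ 2).
pose phi (zm : F * F) := let p := rep (a zm.1) in
  mk3 (co c 0 + p.1 + lam p zm.2) (co c 1 + p.2 + lam p zm.2 * zm.2) zm.1.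
apply: (@leq_trans #|setX Z [set: F]|).
  by rewrite cardsX cardsT mulnC leq_mul2r cZ orbT.
apply: (@inj_card_le _ _ _ _ phi).
  move=> [z m] [z' m']; rewrite !in_setX !inE /= => /andP [az _] /andP [az' _].
  rewrite /phi /=; set p := rep (a z); set p' := rep (a z') => e.
  have e0 := congr1 (fun v => co v 0) e; have e1 := congr1 (fun v => co v 1) e.
  have e2 := congr1 (fun v => co v 2) e.
  move: e0 e1 e2; rewrite /= !mk3E0 !mk3E1 !mk3E2 => e0 e1 e2.
  subst z'; rewrite -/p in e0 e1 *.
  have el : lam p m = lam p m' by apply: (addrI (co c 0 + p.1)).
  have em : lam p m * m = lam p m * m' by rewrite {2}el; apply: (addrI (co c 1 + p.2)).
  have [l0|l0] := eqVneq (lam p m) 0; last by rewrite (mulfI l0 em).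
  have hz (mm : F) : lam p mm = 0 -> p.1 + p.2 * mm = 0.
    rewrite /lam => /eqP; rewrite mulf_eq0 invr_eq0 (negbTE (onepm2 mm)) orbF.
    by rewrite mulf_eq0 oppr_eq0 (negbTE two_neq0) /= => /eqP.
  have h1 := hz _ l0; have h2 := hz m'; rewrite -el in h2; have {}h2 := h2 l0.
  have [y0|y0] := eqVneq p.2 0.
    exfalso; move: az; rewrite -(repP (a z)) -/p y0 (_ : p.1 = 0) ?expr0n ?addr0 ?eqxx //.
    by rewrite -h1 y0 mul0r addr0.
  congr (_, _); apply: (mulfI y0); apply: (addrI p.1); by rewrite h1 h2.
move=> [z m] _; rewrite inE on_sphereE /phi /= mk3E0 mk3E1 mk3E2.
rewrite /=.
set p := rep (a z); have hp : p.1 ^+ 2 + p.2 ^+ 2 = a z by exact: repP.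
apply/eqP; rewrite -[r](subrK ((z - co c 2) ^+ 2)) -/(a z) -hp /lam /Q3.
field; exact: onepm2.
Qed.

End Field.

Section Count.
Variable F : finFieldType.
Hypothesis hq : (#|F| %% 4 = 3)%N.
Variables (P : {set 'rV[F]_3}) (S : {set 'rV[F]_3 * F}).
Hypothesis hS : forall s, s \in S -> is_square s.2.

Definition deg (x : 'rV[F]_3) := #|[set s in S | x \in sph s.1 s.2]|.

Lemma card_sumT (T : finType) (A : {set T}) : #|A| = (\sum_x (x \in A))%N.
Proof. by rewrite -sum1_card big_mkcond /=; apply: eq_bigr => x _; case: (x \in A). Qed.

Lemma incE : incidences P S = (\sum_(x in P) deg x)%N.
Proof.
rewrite /incidences card_sum /deg.
under [RHS]eq_bigr => x _ do rewrite card_sum.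
rewrite pair_big /=; apply: eq_big => [[x s]|[x s] _] /=; first by rewrite in_setX.
by rewrite inE.
Qed.

Lemma sumdeg : (\sum_x deg x = \sum_(s in S) #|sph s.1 s.2|)%N.
Proof.
rewrite /deg; under eq_bigr => x _ do rewrite card_sum.
rewrite exchange_big /=; apply: eq_bigr => s _; by rewrite card_sumT.
Qed.

Lemma sumdeg2 : (\sum_x deg x ^ 2 = \sum_(s in S) \sum_(s' in S) #|sph s.1 s.2 :&: sph s'.1 s'.2|)%N.
Proof.
rewrite /deg; under eq_bigr => x _ do rewrite card_sum expnS expn1 big_distrl /=.
under eq_bigr => x _ do under eq_bigr => s _ do rewrite big_distrr /=.
rewrite exchange_big /=; apply: eq_bigr => s _.
rewrite exchange_big /=; apply: eq_bigr => s' _.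
rewrite card_sumT; apply: eq_bigr => x _; rewrite in_setI.
by case: (x \in sph s.1 s.2); case: (x \in sph s'.1 s'.2).
Qed.

Lemma D_lower : (#|S| * (#|F| * (#|F| - 2)) <= \sum_x deg x)%N.
Proof. by rewrite sumdeg -sum_nat_const; apply: leq_sum => s _; exact: sph_lower. Qed.

Lemma D_upper : (\sum_x deg x <= #|S| * (#|F| * #|F|.+2))%N.
Proof. by rewrite sumdeg -sum_nat_const; apply: leq_sum => s _; exact: sph_upper. Qed.

Lemma E_upper : (\sum_x deg x ^ 2 <= \sum_x deg x + #|S| * #|S| * #|F|.+2)%N.
Proof.
rewrite sumdeg2 sumdeg -mulnA -sum_nat_const -big_split /=; apply: leq_sum => s sS.
rewrite (bigD1 s sS) /= setIid leq_add2l.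
apply: (@leq_trans (\sum_(s' | (s' \in S) && (s' != s)) #|F|.+2)).
  apply: leq_sum => s' /andP [s'S ne]; apply: pair_bound; rewrite ?hS //.
  by rewrite -!surjective_pairing eq_sym.
apply: (@leq_trans (\sum_(s' in S) #|F|.+2)); last by rewrite sum_nat_const.
by rewrite [X in (_ <= X)%N](bigD1 s sS) /= leq_addl.
Qed.

Lemma main_ineq :
  (((#|F| ^ 3 * incidences P S)%N%:R - (#|P| * (\sum_x deg x))%N%:R : int) ^+ 2 <=
   (#|P| * #|F| ^ 3)%N%:R * ((#|F| ^ 3 * (\sum_x deg x ^ 2))%N%:R - ((\sum_x deg x) ^ 2)%N%:R)).
Proof.
set q := #|F|; set M := #|P|; set D := (\sum_x deg x)%N; set E := (\sum_x deg x ^ 2)%N; set I := incidences P S.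
pose f x : int := (q ^ 3)%:R * (deg x)%:R - D%:R.
have h1 : \sum_(x in P) f x = (q ^ 3 * I)%:R - (M * D)%:R.
  rewrite sumrB sumr_const -mulr_sumr -natr_sum -incE -/I natrM mulr_natl.
  by rewrite natrM mulr_natl.
have h2 : \sum_(x in P) f x ^+ 2 <= \sum_x f x ^+ 2.
  rewrite big_mkcond /=; apply: ler_sum => x _; case: (x \in P) => //; exact: sqr_ge0.
have h3 : \sum_x f x ^+ 2 = (q ^ 3)%:R * ((q ^ 3 * E)%:R - (D ^ 2)%:R).
  rewrite /f var_expandT card_mx -natr_sum -/D.
  rewrite (eq_bigr (fun x => ((deg x) ^ 2)%:R)); last by move=> x _; rewrite natrX.
  by rewrite -natr_sum -/E !natrM; ring.
rewrite -h1; apply: le_trans (cs_int P f) _.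
rewrite natrM -mulrA ler_wpM2l ?ler0n // -h3 //.
Qed.

End Count.

Lemma to_nat_ineq (F : finFieldType) (P : {set 'rV[F]_3}) (S : {set 'rV[F]_3 * F}) :
  let q := #|F| in let M := #|P| in let D := (\sum_x deg S x)%N in
  let E := (\sum_x deg S x ^ 2)%N in let I := incidences P S in
  (((q ^ 3 * I)%:R - (M * D)%:R : int) ^+ 2 <= (M * q ^ 3)%:R * ((q ^ 3 * E)%:R - (D ^ 2)%:R)) ->
  ((q ^ 3 * I) ^ 2 <= 2 * (M * D) ^ 2 + 2 * (M * q ^ 3 * (q ^ 3 * E - D ^ 2)))%N.
Proof.
move=> q M D E I cs.
set y : int := (q ^ 3 * I)%:R; set z : int := (M * D)%:R.
have hw : ((q ^ 3 * E)%:R - (D ^ 2)%:R : int) <= (q ^ 3 * E - D ^ 2)%N%:R.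
  case: (leqP (D ^ 2) (q ^ 3 * E)) => h; first by rewrite natrB.
  apply: (@le_trans _ _ 0); last by rewrite ler0n.
  by rewrite subr_le0 ler_nat ltnW.
have hY : y ^+ 2 <= 2 * z ^+ 2 + 2 * (y - z) ^+ 2.
  by rewrite -subr_ge0 (_ : _ - _ = (y - 2 * z) ^+ 2) ?sqr_ge0 //; ring.
rewrite -(ler_nat int).
have -> : (((q ^ 3 * I) ^ 2)%:R : int) = y ^+ 2 by rewrite /y natrX.
apply: le_trans hY _.
rewrite natrD; apply: lerD.
  by rewrite (natrM int 2 ((M * D) ^ 2)) (natrX int (M * D) 2).
rewrite (natrM int 2) ler_wpM2l //; apply: le_trans cs _.
by rewrite (natrM int (M * q ^ 3)) ler_wpM2l.
Qed.
Local Close Scope ring_scope.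

Lemma ar1 (q M : nat) : 3 <= q -> q^3*(M*(q*q.+2)) <= 3*M*q^5.
Proof. move=> h; nia. Qed.
Lemma ar2 (q M : nat) : 3 <= q -> q^3*(M*M*q.+2) <= 6*M^2*q^3 + (M*(q*(q-2)))^2.
Proof. move=> h; nia. Qed.
Lemma ar3 (q M : nat) : 3 <= q -> M*(M*(q*q.+2)) <= 3*M^2*q^2.
Proof. move=> h; nia. Qed.
Lemma ar4 (q M k : nat) : M ^ 3 * q ^ 4 * M <= M ^ 3 * q ^ 4 * (k * q ^ 2) -> M ^ 4 * q ^ 4 <= k * (M ^ 3 * q ^ 6).
Proof. nia. Qed.
Lemma ar5 (q M k : nat) : M ^ 2 * q ^ 6 * q ^ 2 <= M ^ 2 * q ^ 6 * (k * M) -> M ^ 2 * q ^ 8 <= k * (M ^ 3 * q ^ 6).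
Proof. nia. Qed.
Lemma ar6 (q M I k : nat) : (q ^ 3 * I) ^ 2 <= 2 * (3 * M ^ 2 * q ^ 2) ^ 2 + 2 * (M * q ^ 3 * (3 * M * q ^ 5 + 6 * M ^ 2 * q ^ 3)) ->
  M ^ 4 * q ^ 4 <= k * (M ^ 3 * q ^ 6) -> M ^ 2 * q ^ 8 <= k * (M ^ 3 * q ^ 6) ->
  I ^ 2 * q ^ 6 <= ((24 * k + 12) * M ^ 3) * q ^ 6.
Proof.
have -> : 2 * (3 * M ^ 2 * q ^ 2) ^ 2 + 2 * (M * q ^ 3 * (3 * M * q ^ 5 + 6 * M ^ 2 * q ^ 3))
  = 18 * (M ^ 4 * q ^ 4) + 6 * (M ^ 2 * q ^ 8) + 12 * (M ^ 3 * q ^ 6) by ring.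
have -> : (q ^ 3 * I) ^ 2 = I ^ 2 * q ^ 6 by ring.
have -> : (24 * k + 12) * M ^ 3 * q ^ 6 = 18 * (k * (M ^ 3 * q ^ 6)) + 6 * (k * (M ^ 3 * q ^ 6)) + 12 * (M ^ 3 * q ^ 6) by ring.
move=> h a1 a2; apply: leq_trans h _.
by rewrite leq_add2r; apply: leq_add; rewrite leq_mul2l ?a1 ?a2 orbT.
Qed.

Lemma arith (q M D E I k : nat) : 3 <= q -> M * (q * (q - 2)) <= D -> D <= M * (q * q.+2) ->
  E <= D + M * M * q.+2 -> (q ^ 3 * I) ^ 2 <= 2 * (M * D) ^ 2 + 2 * (M * q ^ 3 * (q ^ 3 * E - D ^ 2)) ->
  q ^ 2 <= k * M -> M <= k * q ^ 2 -> I ^ 4 <= (24 * k + 12) ^ 2 * (M ^ 3 * M ^ 3).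
Proof.
move=> q3 L U EU cs h1 h2.
have e1 : q ^ 3 * E <= q ^ 3 * D + q ^ 3 * (M * M * q.+2) by rewrite -mulnDr leq_mul2l EU orbT.
have e2 : q ^ 3 * D <= 3 * M * q ^ 5.
  apply: (@leq_trans (q ^ 3 * (M * (q * q.+2)))); first by rewrite leq_mul2l U orbT.
  exact: ar1.
have e3 : q ^ 3 * (M * M * q.+2) <= 6 * M ^ 2 * q ^ 3 + D ^ 2.
  apply: (@leq_trans (6 * M ^ 2 * q ^ 3 + (M * (q * (q - 2))) ^ 2)); first exact: ar2.
  by rewrite leq_add2l leq_exp2r.
have hW : q ^ 3 * E - D ^ 2 <= 3 * M * q ^ 5 + 6 * M ^ 2 * q ^ 3.
  rewrite leq_subLR; move: e1 e2 e3; clear; lia.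
have hZ : M * D <= 3 * M ^ 2 * q ^ 2.
  apply: (@leq_trans (M * (M * (q * q.+2)))); first by rewrite leq_mul2l U orbT.
  exact: ar3.
have s1 : (q ^ 3 * I) ^ 2 <= 2 * (3 * M ^ 2 * q ^ 2) ^ 2 + 2 * (M * q ^ 3 * (3 * M * q ^ 5 + 6 * M ^ 2 * q ^ 3)).
  apply: leq_trans cs _; apply: leq_add.
    by rewrite leq_mul2l leq_exp2r.
  by rewrite leq_mul2l leq_mul2l hW !orbT.
have a1 : M ^ 4 * q ^ 4 <= k * (M ^ 3 * q ^ 6) by apply: ar4; rewrite leq_mul2l h2 orbT.
have a2 : M ^ 2 * q ^ 8 <= k * (M ^ 3 * q ^ 6) by apply: ar5; rewrite leq_mul2l h1 orbT.
have s2 := ar6 s1 a1 a2.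
have s3 : I ^ 2 <= (24 * k + 12) * M ^ 3.
  by move: s2; rewrite leq_pmul2r // expn_gt0; case: q q3 {L U EU cs h1 h2 e1 e2 e3 hW hZ s1 a1 a2}.
have -> : I ^ 4 = (I ^ 2) ^ 2 by rewrite -expnM.
have -> : (24 * k + 12) ^ 2 * (M ^ 3 * M ^ 3) = ((24 * k + 12) * M ^ 3) ^ 2 by rewrite expnMn expnS expn1.
by rewrite leq_exp2r.
Qed.

Theorem corollary1p5 :
  forall k : nat, exists C : nat,
  forall (F : finFieldType) (P : {set 'rV[F]_3}) (S : {set 'rV[F]_3 * F}),
    #|F| %% 4 = 3 ->
    (forall s, s \in S -> is_square s.2) ->
    #|P| = #|S| ->
    #|F| ^ 2 <= k * #|P| -> #|P| <= k * #|F| ^ 2 ->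
    incidences P S ^ 4 <= C * (#|P| ^ 3 * #|S| ^ 3).
Proof.
move=> k; exists ((24 * k + 12) ^ 2)%N => F P S hq hS hPS h1 h2.
have q3 : (3 <= #|F|)%N by move: hq; lia.
have L := D_lower hq S; have U := D_upper hq S; have EU := E_upper hq hS.
have cs := to_nat_ineq (main_ineq P S).
rewrite -hPS in L U EU *.
exact: (arith q3 L U EU cs h1 h2).
Qed.
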